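(* Let $R$ be a Boolean ring (with identity). The following are equivalent: (1) $R$ is an Ikeda–Nakayama ring, i.e. $\mathrm{Ann}(I_1\cap I_2)=\mathrm{Ann}(I_1)+\mathrm{Ann}(I_2)$ for all ideals $I_1,I_2$ of $R$; (2) for any two ideals $A,B$ of $R$ with $A\cap B=(0)$, $\mathrm{Ann}(A)+\mathrm{Ann}(B)=R$; (3) $R$ is self-injective.
   Context: A Boolean ring is a ring in which every element is idempotent (hence it is commutative). $\mathrm{Ann}(X)=\{r\in R: rX=0\}$. *)

(* Defs.v *)
From HB Require Import structures.
From mathcomp Require Import all_boot all_order all_algebra.
Set Implicit Arguments. Unset Strict Implicit. Unset Printing Implicit Defensive.
Import GRing.Theory.
Local Open Scope ring_scope.

Definition boolean_ring (R : pzRingType) : Prop := forall x : R, x * x = x.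

Definition is_ideal (R : pzRingType) (I : R -> Prop) : Prop :=
  [/\ I 0,
      (forall x y, I x -> I y -> I (x + y)),
      (forall x, I x -> I (- x)),
      (forall r x, I x -> I (r * x)) &
      (forall r x, I x -> I (x * r))].

Definition ann (R : pzRingType) (X : R -> Prop) : R -> Prop :=
  fun r => forall x, X x -> r * x = 0.

Definition ideal_cap (R : pzRingType) (I J : R -> Prop) : R -> Prop :=
  fun x => I x /\ J x.

Definition ideal_sum (R : pzRingType) (I J : R -> Prop) : R -> Prop :=
  fun x => exists a b, [/\ I a, J b & x = a + b].

Definition set_eq (R : Type) (A B : R -> Prop) : Prop := forall x, A x <-> B x.

Definition ikeda_nakayama (R : pzRingType) : Prop :=
  forall I1 I2 : R -> Prop, is_ideal I1 -> is_ideal I2 ->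
    set_eq (ann (ideal_cap I1 I2)) (ideal_sum (ann I1) (ann I2)).

Definition ann_sum_whole (R : pzRingType) : Prop :=
  forall A B : R -> Prop, is_ideal A -> is_ideal B ->
    set_eq (ideal_cap A B) (fun x => x = 0) ->
    set_eq (ideal_sum (ann A) (ann B)) (fun _ => True).

(* Injective (left) R-module: every R-linear map into E from a submodule
   (given by an injective linear map f : M -> N) extends along f. *)
Definition injective_module (R : pzRingType) (E : lmodType R) : Prop :=
  forall (M N : lmodType R) (f : {linear M -> N}) (g : {linear M -> E}),
    injective f -> exists h : {linear N -> E}, forall m, h (f m) = g m.

Definition self_injective (R : pzRingType) : Prop := injective_module R^o.

(* Main.v *)
From HB Require Import structures.
Require Import Defs.
From mathcomp Require Import all_boot all_order all_algebra.
From Stdlib Require Import Classical ClassicalEpsilon FunctionalExtensionality PropExtensionality.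
Set Implicit Arguments. Unset Strict Implicit. Unset Printing Implicit Defensive.
Import GRing.Theory.
Local Open Scope ring_scope.

Section Bool.
Variables (R : pzRingType) (hR : boolean_ring R).

Lemma b_two0 (x : R) : x + x = 0.
Proof.
have := hR (x + x); rewrite mulrDl !mulrDr !hR.
by move/(congr1 (fun z => z - (x + x))); rewrite addrK subrr.
Qed.

Lemma b_opp (x : R) : - x = x.
Proof. by rewrite -[LHS]add0r -(b_two0 x) addrK. Qed.

Lemma b_comm (x y : R) : x * y = y * x.
Proof.
have := hR (x + y); rewrite mulrDl !mulrDr !hR => E.
have E2 : x * y + y * x = 0.
  apply: (addIr (x + y)); rewrite add0r -{2}E.
  by rewrite addrACA [x * y + x]addrC.
by move/eqP: E2; rewrite addr_eq0 => /eqP ->; rewrite b_opp.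
Qed.

Lemma ann_ideal_r (X : R -> Prop) a r : ann X a -> ann X (r * a).
Proof. by move=> Ha x Xx /=; rewrite -mulrA Ha ?mulr0. Qed.

Lemma ann_ideal_l (X : R -> Prop) a r : ann X a -> ann X (a * r).
Proof. by move=> Ha x Xx /=; rewrite (b_comm a r) -mulrA Ha ?mulr0. Qed.

Lemma sum_one (X Y : R -> Prop) :
  ideal_sum (ann X) (ann Y) 1 -> set_eq (ideal_sum (ann X) (ann Y)) (fun _ => True).
Proof.
move=> [u [v [Hu Hv E]]] x; split=> // _.
exists (x * u), (x * v); split; [exact: ann_ideal_r|exact: ann_ideal_r|].
by rewrite -mulrDr -E mulr1.
Qed.

Lemma in_to_as : ikeda_nakayama R -> ann_sum_whole R.
Proof.
move=> H A B iA iB AB; apply: sum_one.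
have [H1 _] := H A B iA iB 1; apply: H1 => x /AB ->; by rewrite mulr0.
Qed.

Lemma as_to_in : ann_sum_whole R -> ikeda_nakayama R.
Proof.
move=> H I1 I2 [I10 I1D I1N I1l I1r] [I20 I2D I2N I2l I2r] r; split; last first.
  by move=> [a [b [Ha Hb ->]]] x [x1 x2]; rewrite mulrDl Ha // Hb // addr0.
move=> Hr.
pose A x := exists y, I1 y /\ x = r * y.
pose B x := exists y, I2 y /\ x = r * y.
have iA : is_ideal A.
  split.
  - by exists 0; rewrite mulr0.
  - by move=> _ _ [y [Hy ->]] [z [Hz ->]]; exists (y + z); rewrite mulrDr; split => //; apply: I1D.
  - by move=> _ [y [Hy ->]]; exists (- y); rewrite mulrN; split => //; apply: I1N.
  - by move=> s _ [y [Hy ->]]; exists (s * y); rewrite mulrA (b_comm s r) -mulrA; split => //; apply: I1l.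
  - by move=> s _ [y [Hy ->]]; exists (y * s); rewrite mulrA; split => //; apply: I1r.
have iB : is_ideal B.
  split.
  - by exists 0; rewrite mulr0.
  - by move=> _ _ [y [Hy ->]] [z [Hz ->]]; exists (y + z); rewrite mulrDr; split => //; apply: I2D.
  - by move=> _ [y [Hy ->]]; exists (- y); rewrite mulrN; split => //; apply: I2N.
  - by move=> s _ [y [Hy ->]]; exists (s * y); rewrite mulrA (b_comm s r) -mulrA; split => //; apply: I2l.
  - by move=> s _ [y [Hy ->]]; exists (y * s); rewrite mulrA; split => //; apply: I2r.
have AB : set_eq (ideal_cap A B) (fun x => x = 0).
  move=> x; split; last first.
    by move=> ->; split; [exists 0|exists 0]; rewrite mulr0.
  move=> [[y [Hy E1]] [z [Hz E2]]].
  rewrite -(hR x); rewrite {1}E1 {1}E2 mulrA -(mulrA r y r) (b_comm y r) mulrA hR -mulrA.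
  apply: Hr; split; [exact: I1r|exact: I2l].
have [_ H2] := H A B iA iB AB r.
have [u [v [Hu Hv E]]] := H2 I.
exists (r * u), (r * v); split.
- move=> x Hx; rewrite -mulrA (b_comm u x) mulrA (b_comm (r * x) u); apply: Hu; by exists x.
- move=> x Hx; rewrite -mulrA (b_comm v x) mulrA (b_comm (r * x) v); apply: Hv; by exists x.
- by rewrite -mulrDr -E hR.
Qed.
End Bool.
Section Ext.
Variables (R : pzRingType) (hR : boolean_ring R).

Lemma baer (H2 : ann_sum_whole R) (I : R -> Prop) (psi : R -> R) :
  I 0 -> (forall x y, I x -> I y -> I (x + y)) -> (forall a x, I x -> I (a * x)) ->
  (forall x y, I x -> I y -> psi (x + y) = psi x + psi y) ->
  (forall a x, I x -> psi (a * x) = a * psi x) ->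
  exists v, forall r, I r -> psi r = r * v.
Proof.
move=> I0 ID IM pD pM.
have p0 : psi 0 = 0 by rewrite -(mul0r 0) pM // mul0r.
have pI : forall t, I t -> psi t = psi t * t.
  by move=> t It; rewrite -{1}(hR t) pM // (b_comm hR).
have pII : forall t, I t -> I (psi t) by move=> t It; rewrite pI //; apply: IM.
have ppsi : forall t, I t -> psi (psi t) = psi t.
  by move=> t It; have E := pI t It; rewrite {1}E pM ?hR // -E.
pose A x := exists r, I r /\ x = psi r.
pose B x := exists r, I r /\ x = r - psi r.
have iA : is_ideal A.
  split.
  - by exists 0; rewrite p0.
  - move=> _ _ [x [Ix ->]] [y [Iy ->]]; exists (x + y); split; first exact: ID.
    by rewrite pD.
  - move=> _ [x [Ix ->]]; exists (-1 * x); split; first exact: IM.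
    by rewrite pM // mulN1r.
  - move=> s _ [x [Ix ->]]; exists (s * x); split; first exact: IM.
    by rewrite pM.
  - move=> s _ [x [Ix ->]]; exists (s * x); split; first exact: IM.
    by rewrite pM // (b_comm hR).
have iB : is_ideal B.
  split.
  - by exists 0; rewrite p0 subr0.
  - move=> _ _ [x [Ix ->]] [y [Iy ->]]; exists (x + y); split; first exact: ID.
    by rewrite pD // opprD addrACA.
  - move=> _ [x [Ix ->]]; exists (-1 * x); split; first exact: IM.
    by rewrite pM // !mulN1r opprD.
  - move=> s _ [x [Ix ->]]; exists (s * x); split; first exact: IM.
    by rewrite pM // mulrBr.
  - move=> s _ [x [Ix ->]]; exists (s * x); split; first exact: IM.
    by rewrite pM // (b_comm hR) mulrBr.
have AB : set_eq (ideal_cap A B) (fun x => x = 0).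
  move=> x; split; last first.
    by move=> ->; split; exists 0; rewrite p0 ?subr0.
  move=> [[r [Ir E1]] [s [Is E2]]].
  rewrite -(hR x) {1}E1 {1}E2 mulrBr.
  have e1 : psi r * s = psi (s * r) by rewrite (b_comm hR) pM.
  have e2 : psi r * psi s = psi (s * r) by rewrite -pM ?e1 ?ppsi //; apply: IM.
  by rewrite e1 e2 subrr.
have [_ H] := H2 A B iA iB AB 1.
have [u [v [Hu Hv E]]] := H Logic.I.
exists v => r Ir.
have h1 : u * psi r = 0 by apply: Hu; exists r.
have h2 : v * (r - psi r) = 0 by apply: Hv; exists r.
move/eqP: h2; rewrite mulrBr subr_eq0 => /eqP h2.
by rewrite -[psi r]mul1r E mulrDl h1 add0r -h2 (b_comm hR).
Qed.
End Ext.
Section Tower.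
Variables (T : Type) (succ : (T -> Prop) -> (T -> Prop)).
Hypothesis Hinf : forall K x, K x -> succ K x.

Inductive tw : (T -> Prop) -> Prop :=
| tw_s K : tw K -> tw (succ K)
| tw_u (F : (T -> Prop) -> Prop) : (forall K, F K -> tw K) ->
    tw (fun x => exists K, F K /\ K x).

Definition sub (A B : T -> Prop) := forall x, A x -> B x.

Lemma sub_eq A B : sub A B -> sub B A -> A = B.
Proof.
move=> h1 h2; apply: functional_extensionality => x.
by apply: propositional_extensionality; split; [apply: h1|apply: h2].
Qed.

Definition extreme c := forall x, tw x -> sub x c -> x <> c -> sub (succ x) c.

Lemma lemA c : tw c -> extreme c -> forall x, tw x -> sub x c \/ sub (succ c) x.
Proof.
move=> Hc Ec x; elim=> {x} [K HK IH|F HF IH].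
- case: IH => [Kc|cK].
  + case: (classic (K = c)) => [->|ne]; first by right.
    by left; apply: Ec.
  + by right=> y /cK /Hinf.
- case: (classic (forall K, F K -> sub K c)) => [all|].
  + by left=> y [K [FK Ky]]; apply: (all K).
  + move/not_all_ex_not=> [K H]; have [FK nKc] := imply_to_and _ _ H.
    case: (IH K FK) => // sK; right=> y /sK Ky; by exists K.
Qed.

Lemma lemB c : tw c -> extreme c.
Proof.
elim=> {c} [c Hc IH|F HF IH].
- move=> x Hx sx nx.
  case: (lemA Hc IH Hx) => [xc|cx].
  + case: (classic (x = c)) => [->|ne]; first by [].
    by move=> y /(IH x Hx xc ne) /Hinf.
  + by case: nx; apply: sub_eq.
- move=> x Hx sx nx.
  have : ~ sub (fun x => exists K, F K /\ K x) x by move=> h; apply: nx; apply: sub_eq.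
  move/not_all_ex_not=> [y H]; have [[K' [FK' K'y]] nxy] := imply_to_and _ _ H.
  case: (lemA (HF K' FK') (IH K' FK') Hx) => [xK'|sK'].
  + have ne : x <> K' by move=> E; apply: nxy; rewrite E.
    move=> z /(IH K' FK' x Hx xK' ne) zK'; by exists K'.
  + by case: nxy; apply: sK'; apply: Hinf.
Qed.

Lemma tw_total A B : tw A -> tw B -> sub A B \/ sub B A.
Proof.
move=> HA HB; case: (lemA HB (lemB HB) HA) => [|h]; first by left.
by right=> y /Hinf /h.
Qed.
End Tower.

Section Zorn.
Variables (T : Type) (le : T -> T -> Prop).
Hypotheses (le_refl : forall x, le x x)
  (le_trans : forall x y z, le x y -> le y z -> le x z).
Definition chain (K : T -> Prop) := forall a b, K a -> K b -> le a b \/ le b a.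
Hypothesis ub : forall K, chain K -> exists u, forall x, K x -> le x u.

Lemma zorn : exists m, forall x, le m x -> le x m.
Proof.
apply: NNPP => Hno.
have Hs : forall u, exists y, le u y /\ ~ le y u.
  move=> u; apply: NNPP => h; apply: Hno; exists u => x lux.
  apply: NNPP => nxu; apply: h; by exists x.
have [t0 _] : exists t : T, True.
  have [|u _] := ub (K := fun _ => False); first by [].
  by exists u.
have Hu : forall K : T -> Prop, exists u, chain K -> forall x, K x -> le x u.
  move=> K; case: (classic (chain K)) => [/ub [u Hu]|nc]; first by exists u.
  by exists t0.
pose U K := proj1_sig (constructive_indefinite_description _ (Hu K)).
have HU : forall K, chain K -> forall x, K x -> le x (U K).
  move=> K; exact: (proj2_sig (constructive_indefinite_description _ (Hu K))).
pose Y K := proj1_sig (constructive_indefinite_description _ (Hs (U K))).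
have HY : forall K, le (U K) (Y K) /\ ~ le (Y K) (U K).
  move=> K; exact: (proj2_sig (constructive_indefinite_description _ (Hs (U K)))).
pose succ K := fun x => K x \/ (chain K /\ x = Y K).
have Hinf : forall K x, K x -> succ K x by move=> K x Kx; left.
have Hch : forall K, tw succ K -> chain K.
  move=> K; elim=> {K} [K HK IH|F HF IH].
  - move=> a b [Ka|[_ ->]] [Kb|[_ ->]]; first exact: IH.
    + left; apply: le_trans (HU K IH a Ka) (proj1 (HY K)).
    + right; apply: le_trans (HU K IH b Kb) (proj1 (HY K)).
    + by left.
  - move=> a b [K1 [F1 K1a]] [K2 [F2 K2b]].
    case: (tw_total Hinf (HF K1 F1) (HF K2 F2)) => h.
    + by apply: (IH K2 F2) => //; apply: h.
    + by apply: (IH K1 F1) => //; apply: h.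
pose W := fun x => exists K, tw succ K /\ K x.
have HW : tw succ W by apply: tw_u.
have cW := Hch W HW.
have YW : W (Y W) by exists (succ W); split; [apply: tw_s|right].
by case: (HY W) => _; apply; apply: HU.
Qed.
End Zorn.
Section Extend.
Variables (R : pzRingType) (hR : boolean_ring R) (H2 : ann_sum_whole R).
Variables (M N : lmodType R) (f : {linear M -> N}) (g : {linear M -> R^o}).
Hypothesis finj : injective f.

Record cand := Cand {
  dom : N -> Prop; fn : N -> R;
  c_add : forall x y, dom x -> dom y -> dom (x + y);
  c_scale : forall (a : R) x, dom x -> dom (a *: x);
  c_f : forall m, dom (f m);
  c_fadd : forall x y, dom x -> dom y -> fn (x + y) = fn x + fn y;
  c_fscale : forall (a : R) x, dom x -> fn (a *: x) = a * fn x;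
  c_g : forall m, fn (f m) = g m }.

Definition cle (c1 c2 : cand) :=
  (forall x, dom c1 x -> dom c2 x) /\ (forall x, dom c1 x -> fn c2 x = fn c1 x).

Lemma gZ (a : R) m : g (a *: m) = a * g m.
Proof. exact: linearZ. Qed.

Lemma dom_0 (c : cand) : dom c 0.
Proof. by rewrite -(scale0r (f 0)); apply: c_scale; apply: c_f. Qed.

Definition dom0 (x : N) := exists m, x = f m.
Definition fn0 (x : N) : R :=
  match excluded_middle_informative (exists m, x = f m) with
  | left H => g (proj1_sig (constructive_indefinite_description _ H))
  | right _ => 0 end.

Lemma fn0_f m : fn0 (f m) = g m.
Proof.
rewrite /fn0; case: excluded_middle_informative => [H|H]; last by case: H; exists m.
case: (constructive_indefinite_description _ H) => m' /= /finj ->. done.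
Qed.

Lemma base_cand : cand.
Proof.
refine (@Cand dom0 fn0 _ _ _ _ _ _).
- by move=> _ _ [m ->] [m' ->]; exists (m + m'); rewrite linearD.
- by move=> a _ [m ->]; exists (a *: m); rewrite linearZ.
- by move=> m; exists m.
- by move=> _ _ [m ->] [m' ->]; rewrite -linearD !fn0_f linearD.
- by move=> a _ [m ->]; rewrite -linearZ !fn0_f gZ.
- exact: fn0_f.
Defined.

Section Union.
Variables (K : cand -> Prop) (c0 : cand) (Kc0 : K c0) (chK : chain cle K).

Definition domU x := exists c, K c /\ dom c x.
Definition fnU (x : N) : R :=
  match excluded_middle_informative (exists c, K c /\ dom c x) with
  | left H => fn (proj1_sig (constructive_indefinite_description _ H)) x
  | right _ => 0 end.

Lemma fnU_eq c x : K c -> dom c x -> fnU x = fn c x.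
Proof.
move=> Kc dx; rewrite /fnU; case: excluded_middle_informative => [H|H]; last first.
  by case: H; exists c.
case: (constructive_indefinite_description _ H) => c' [Kc' dc'] /=.
by case: (chK Kc' Kc) => [[_ h]|[_ h]]; rewrite ?h.
Qed.

Lemma common x y : domU x -> domU y -> exists c, [/\ K c, dom c x & dom c y].
Proof.
move=> [c1 [K1 d1]] [c2 [K2 d2]].
case: (chK K1 K2) => [[h _]|[h _]]; [exists c2|exists c1]; split => //; exact: h.
Qed.

Definition union_cand : cand.
Proof.
refine (@Cand domU fnU _ _ _ _ _ _).
- move=> x y dx dy; have [c [Kc cx cy]] := common dx dy.
  by exists c; split => //; apply: c_add.
- by move=> a x [c [Kc cx]]; exists c; split => //; apply: c_scale.
- by move=> m; exists c0; split => //; apply: c_f.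
- move=> x y dx dy; have [c [Kc cx cy]] := common dx dy.
  by rewrite !(fnU_eq Kc) // ?c_fadd //; apply: c_add.
- move=> a x [c [Kc cx]].
  by rewrite !(fnU_eq Kc) // ?c_fscale //; apply: c_scale.
- by move=> m; rewrite (fnU_eq Kc0) ?c_g //; apply: c_f.
Defined.

Lemma union_ub c : K c -> cle c union_cand.
Proof.
move=> Kc; split=> [x dx|x dx]; first by exists c.
exact: fnU_eq.
Qed.
End Union.

Lemma cle_ub K : chain cle K -> exists u, forall x, K x -> cle x u.
Proof.
move=> chK; case: (classic (exists c, K c)) => [[c0 Kc0]|nK].
  by exists (union_cand Kc0 chK) => c Kc; apply: union_ub.
by exists base_cand => c Kc; case: nK; exists c.
Qed.

Section Step.
Variables (c : cand) (n : N) (nn : ~ dom c n).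

Let I (r : R) := dom c (r *: n).
Let psi (r : R) := fn c (r *: n).

Lemma step_v : exists v, forall r, I r -> psi r = r * v.
Proof.
apply: (baer hR H2).
- by rewrite /I scale0r; apply: dom_0.
- by move=> x y; rewrite /I scalerDl; apply: c_add.
- by move=> a x; rewrite /I -scalerA; apply: c_scale.
- by move=> x y Ix Iy; rewrite /psi scalerDl c_fadd.
- by move=> a x Ix; rewrite /psi -scalerA c_fscale.
Qed.

Variable v : R.
Hypothesis Hv : forall r, I r -> psi r = r * v.

Definition dom1 x := exists p r, dom c p /\ x = p + r *: n.
Definition fn1 (x : N) : R :=
  match excluded_middle_informative (exists pr : N * R, dom c pr.1 /\ x = pr.1 + pr.2 *: n) with
  | left H => let pr := proj1_sig (constructive_indefinite_description _ H) in
      fn c pr.1 + pr.2 * v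
  | right _ => 0 end.

Lemma fn1_eq p r : dom c p -> fn1 (p + r *: n) = fn c p + r * v.
Proof.
move=> dp; rewrite /fn1; case: excluded_middle_informative => [H|H]; last first.
  by case: H; exists (p, r).
case: (constructive_indefinite_description _ H) => [[p0 r0]] /= [dp0 E].
have E2 : p0 = p + (r - r0) *: n.
  by rewrite scalerBl addrA E addrK.
have Ir : I (r - r0).
  rewrite /I; have -> : (r - r0) *: n = p0 + (-1) *: p by rewrite E2 scaleN1r addrAC subrr add0r.
  by apply: c_add => //; apply: c_scale.
rewrite E2 c_fadd //; have := Hv Ir; rewrite /psi => ->; rewrite -addrA; congr (_ + _).
by rewrite -mulrDl subrK.
Qed.

Definition ext_cand : cand.
Proof.
refine (@Cand dom1 fn1 _ _ _ _ _ _).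
- move=> _ _ [p1 [r1 [d1 ->]]] [p2 [r2 [d2 ->]]].
  by exists (p1 + p2), (r1 + r2); split; [apply: c_add|rewrite scalerDl addrACA].
- move=> a _ [p [r [d ->]]].
  by exists (a *: p), (a * r); split; [apply: c_scale|rewrite scalerDr scalerA].
- by move=> m; exists (f m), 0; split; [apply: c_f|rewrite scale0r addr0].
- move=> _ _ [p1 [r1 [d1 ->]]] [p2 [r2 [d2 ->]]].
  rewrite addrACA -scalerDl !fn1_eq //; last exact: c_add.
  by rewrite c_fadd // mulrDl addrACA.
- move=> a _ [p [r [d ->]]].
  rewrite scalerDr scalerA !fn1_eq //; last exact: c_scale.
  by rewrite c_fscale // mulrDr mulrA.
- move=> m; rewrite -[f m]addr0 -(scale0r n) fn1_eq; last exact: c_f.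
  by rewrite mul0r addr0 c_g.
Defined.

Lemma ext_ge : cle c ext_cand.
Proof.
rewrite /cle; split=> x dx /=; first by exists x, 0; split => //; rewrite scale0r addr0.
by rewrite -{1}[x]addr0 -(scale0r n) fn1_eq // mul0r addr0.
Qed.

Lemma ext_not_le : ~ cle ext_cand c.
Proof.
move=> [h _]; apply: nn; apply: h; exists 0, 1; split; first exact: dom_0.
by rewrite scale1r add0r.
Qed.
End Step.

Lemma extension : exists h : {linear N -> R^o}, forall m, h (f m) = g m.
Proof.
have [c Hc] := zorn (le := cle) (fun x => conj (fun _ h => h) (fun _ _ => erefl))
  (fun x y z '(conj h1 h2) '(conj h3 h4) =>
     conj (fun t d => h3 t (h1 t d)) (fun t d => etrans (h4 t (h1 t d)) (h2 t d)))
  cle_ub.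
have tot : forall x, dom c x.
  move=> x; apply: NNPP => nx.
  have [v Hv] := step_v c x.
  exact: (@ext_not_le c x nx v Hv (Hc _ (@ext_ge c x v Hv))).
have lin : linear (fn c : N -> R^o).
  by move=> a x y; rewrite c_fadd ?c_fscale //; apply: c_scale.
pose h : {linear N -> R^o} := HB.pack (fn c : N -> R^o) (GRing.isLinear.Build _ _ _ _ (fn c : N -> R^o) lin).
exists h.
exact: c_g.
Qed.
End Extend.
Definition bp (P : Prop) : bool :=
  if excluded_middle_informative P then true else false.
Lemma bpP (P : Prop) : bp P <-> P.
Proof. by rewrite /bp; case: excluded_middle_informative. Qed.

Section SubM.
Variables (R : pzRingType) (S : {pred R^o}) (hS : subsemimod_closed S).
Record SM := MkSM {sv : R^o; sp : sv \in S}.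
HB.instance Definition _ := [isSub for sv].
HB.instance Definition _ := [Choice of SM by <:].
HB.instance Definition _ := GRing.SubChoice_isSubLmodule.Build _ _ _ SM hS.
Definition SMT : lmodType R := SM.
Lemma sv_lin : linear (sv : SMT -> R^o). Proof. by []. Qed.
Definition svL : {linear SMT -> R^o} :=
  HB.pack (sv : SMT -> R^o) (GRing.isLinear.Build _ _ _ _ (sv : SMT -> R^o) sv_lin).
Lemma svL_inj : injective svL.
Proof. by move=> x y /= E; apply: val_inj. Qed.
End SubM.

Section Inj.
Variables (R : pzRingType) (hR : boolean_ring R).

Lemma inj_to_as : self_injective R -> ann_sum_whole R.
Proof.
move=> Hinj A B [A0 AD AN Al Ar] [B0 BD BN Bl Br] AB; apply: sum_one.
pose S : {pred R^o} := fun x => bp (ideal_sum A B x).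
have Sin : forall x, (x \in S) <-> ideal_sum A B x.
  by move=> x; rewrite unfold_in; apply: bpP.
have hS : subsemimod_closed S.
  split; [split|].
  - by apply/Sin; exists 0, 0; split => //; rewrite addr0.
  - move=> u v /Sin [a1 [b1 [Ha1 Hb1 ->]]] /Sin [a2 [b2 [Ha2 Hb2 ->]]]; apply/Sin.
    by exists (a1 + a2), (b1 + b2); split; [apply: AD|apply: BD|rewrite addrACA].
  - move=> a u /Sin [a1 [b1 [Ha1 Hb1 ->]]]; apply/Sin.
    by exists (a * a1), (a * b1); split; [apply: Al|apply: Bl|exact: mulrDr].
pose gfun (z : R) : R :=
  match excluded_middle_informative (ideal_sum A B z) with
  | left H => proj1_sig (constructive_indefinite_description _ H)
  | right _ => 0 end.
have gfun_eq : forall a b, A a -> B b -> gfun (a + b) = a.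
  move=> a b Ha Hb; rewrite /gfun; case: excluded_middle_informative => [H|H]; last first.
    by case: H; exists a, b.
  case: (constructive_indefinite_description _ H) => a' /= [b' [Ha' Hb' E]].
  have : ideal_cap A B (a - a').
    split; first by apply: AD => //; apply: AN.
    have -> : a - a' = b' - b.
      have -> : a = a' + b' - b by rewrite -E addrK.
      by rewrite addrAC [a' + b']addrC addrK.
    by apply: BD => //; apply: BN.
  by move/AB/eqP; rewrite subr_eq0 => /eqP.
pose gg (x : SMT hS) : R^o := gfun (sv x).
have glin : linear gg.
  move=> a x y; rewrite /gg /=.
  have [a1 [b1 [Ha1 Hb1 E1]]] := iffLR (Sin _) (sp x).
  have [a2 [b2 [Ha2 Hb2 E2]]] := iffLR (Sin _) (sp y).
  have -> : a * sv x + sv y = (a * a1 + a2) + (a * b1 + b2).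
    by rewrite E1 E2 mulrDr addrACA.
  rewrite E1 E2 !gfun_eq //; [by apply: AD => //; apply: Al|by apply: BD => //; apply: Bl].
pose g : {linear SMT hS -> R^o} := HB.pack gg (GRing.isLinear.Build _ _ _ _ gg glin).
have [h Hh] := Hinj (SMT hS) R^o (svL hS) g (@svL_inj _ _ hS).
pose c : R := h 1.
have hr : forall r : R, h r = r * c.
  move=> r; have E : h (r *: (1 : R^o)) = r *: h 1 by rewrite linearZ.
  change (h (r * 1) = r * h 1) in E.
  by rewrite mulr1 in E.
have ha : forall a, A a -> a * c = a.
  move=> a Ha; have Sa : a \in S by apply/Sin; exists a, 0; split => //; rewrite addr0.
  have := Hh (MkSM Sa); rewrite /= hr => ->.
  by rewrite /gg /= -[a]addr0 gfun_eq // addr0.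
have hb : forall b, B b -> b * c = 0.
  move=> b Hb; have Sb : b \in S by apply/Sin; exists 0, b; split => //; rewrite add0r.
  have := Hh (MkSM Sb); rewrite /= hr => ->.
  by rewrite /gg /= -[b]add0r gfun_eq.
exists (1 - c), c; split.
- by move=> a Ha; rewrite mulrBl mul1r (b_comm hR) ha // subrr.
- by move=> b Hb; rewrite (b_comm hR) hb.
- by rewrite subrK.
Qed.
End Inj.

Theorem proposition2p10 (R : pzRingType) (hR : boolean_ring R) :
  (ikeda_nakayama R <-> ann_sum_whole R) /\ (ann_sum_whole R <-> self_injective R).
Proof.
split; split.
- exact: in_to_as.
- exact: as_to_in.
- move=> H M N f g fi; exact: (@extension R hR H M N f g fi).
- exact: inj_to_as.
Qed.
Print Assumptions proposition2p10.
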